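(* Let $R$ be an associative ring with identity and $a,b,c,d\in R$ such that $a$ has a $(b,c)$-inverse $a^{\|(b,c)}$. Let $c^{-}$ be any (fixed) inner inverse of $c$ and put $f=c^{-}c$. Then the following are equivalent: (i) $d$ has a $(b,c)$-inverse; (ii) $f\in fda^{\|(b,c)}fR\cap Rfda^{\|(b,c)}f$; (iii) $fda^{\|(b,c)}+1-f$ is invertible in $R$. In this case $d^{\|(b,c)}=a^{\|(b,c)}(fda^{\|(b,c)}+1-f)^{-1}$.
   Context: For $a,b,c\in R$, $a$ is $(b,c)$-invertible if there exists $y\in R$ with $y\in (bRy)\cap(yRc)$, $yab=b$ and $cay=c$; such $y$ is unique and denoted $a^{\|(b,c)}$. An inner inverse of $c$ is an element $c^{-}$ with $cc^{-}c=c$ (it exists here since $c$ is regular whenever a $(b,c)$-inverse exists). *)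

(* Defs.v *)
From HB Require Import structures.
From mathcomp Require Import all_boot all_order all_algebra.
Set Implicit Arguments. Unset Strict Implicit. Unset Printing Implicit Defensive.
Import GRing.Theory.
Local Open Scope ring_scope.

Definition is_bc_inverse (R : pzRingType) (a b c y : R) : Prop :=
  (exists r : R, y = b * r * y) /\ (exists s : R, y = y * s * c)
  /\ y * a * b = b /\ c * a * y = c.

Definition bc_invertible (R : pzRingType) (a b c : R) : Prop :=
  exists y : R, is_bc_inverse a b c y.

Definition is_inverse (R : pzRingType) (x z : R) : Prop := x * z = 1 /\ z * x = 1.

Definition invertible (R : pzRingType) (x : R) : Prop := exists z : R, is_inverse x z.

(* Main.v *)
Require Import Defs.
From HB Require Import structures.
From mathcomp Require Import all_boot all_order all_algebra.
Import GRing.Theory.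
Local Open Scope ring_scope.

Lemma blk {R : pzRingType} {f p q : R} : f * f = f -> p * f = p -> f * q = q ->
  (p + 1 - f) * (q + 1 - f) = p * q + 1 - f.
Proof.
move=> hff hpf hfq.
rewrite mulrBl mulrDl mul1r !mulrBr !mulrDr !mulr1 hpf hfq hff.
rewrite (addrK p (p*q)) (addrK f q).
by rewrite -(addrA q 1 (-f)) (addrA (p*q) q) (addrAC (p*q + q)) (addrK q) addrA.
Qed.

Section S.
Variables (R : pzRingType) (a b c d y cm f : R).
Hypothesis hcm : c * cm * c = c.
Hypothesis hf : f = cm * c.
Hypothesis hy : is_bc_inverse a b c y.

Lemma ff : f * f = f.
Proof. by rewrite hf -!mulrA (mulrA c cm c) hcm. Qed.

Lemma cf : c * f = c.
Proof. by rewrite hf mulrA hcm. Qed.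

Lemma zf {e z : R} : is_bc_inverse e b c z -> z * f = z.
Proof.
case=> _ [[s hs] _]. by rewrite {1}hs -mulrA cf -hs.
Qed.

Lemma fdz {e z : R} : is_bc_inverse e b c z -> f * e * z = f.
Proof. case=> _ [_ [_ h]]. by rewrite hf -!mulrA (mulrA c e z) h. Qed.

Lemma cross {a' e y' z : R} : is_bc_inverse a' b c y' -> is_bc_inverse e b c z ->
  z * e * y' = y'.
Proof. case=> [[r hr] _]; case=> _ [_ [h _]].
by rewrite {1}hr !mulrA h -hr. Qed.

Lemma uniq_bc {e z z' : R} : is_bc_inverse e b c z -> is_bc_inverse e b c z' -> z = z'.
Proof.
move=> hz hz'.
have e1 : z' * e * z = z.
  by case: hz => [[r hr] _]; case: hz' => _ [_ [h _]]; rewrite {1}hr !mulrA h -hr.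
have e2 : z' * e * z = z'.
  case: hz' => _ [[s hs] _]; case: hz => _ [_ [_ h]].
  by rewrite {1}hs -!mulrA (mulrA c e z) h mulrA -hs.
by rewrite -e1 e2.
Qed.

Let hyf : y * f = y := zf hy.
Let hfay : f * a * y = f := fdz hy.

Lemma pf : f * d * y * f = f * d * y.
Proof. by rewrite -mulrA hyf. Qed.

Lemma fp : f * (f * d * y) = f * d * y.
Proof. by rewrite !mulrA ff. Qed.

Lemma fw : f * (f * d * y + 1 - f) = f * d * y.
Proof. by rewrite mulrBr mulrDr mulr1 fp ff (addrK f). Qed.

Lemma w1f : (f * d * y + 1 - f) * (1 - f) = 1 - f.
Proof.
have := blk ff pf (mulr0 f).
by rewrite add0r mulr0 add0r.
Qed.

Lemma cw : c * (f * d * y + 1 - f) = c * d * y.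
Proof. by rewrite mulrBr mulrDr mulr1 cf !mulrA cf (addrK c). Qed.

Lemma toinv {z : R} : is_bc_inverse d b c z ->
  is_inverse (f * d * y + 1 - f) (f * a * z + 1 - f).
Proof.
move=> hz.
have hyaz : y * (a * z) = z by rewrite mulrA (cross hz hy).
split.
  have hq : f * (f * a * z) = f * a * z by rewrite !mulrA ff.
  rewrite (blk ff pf hq).
  by rewrite -!mulrA (mulrA y f) hyf hyaz (mulrA f d z) (fdz hz) (addrAC f 1 (-f)) subrr add0r.
have hq : f * a * z * f = f * a * z by rewrite -mulrA (zf hz).
rewrite (blk ff hq fp).
rewrite -!mulrA (mulrA z f (d * y)) (zf hz) (mulrA z d y) (cross hy hz).
by rewrite (mulrA f a y) hfay (addrAC f 1 (-f)) subrr add0r.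
Qed.

Lemma frominv {u : R} : is_inverse (f * d * y + 1 - f) u ->
  [/\ u * (1 - f) = 1 - f, u * (f * d * y) = f & f * d * y * u = f].
Proof.
case=> wu uw.
have h1 : u * (1 - f) = 1 - f by rewrite -{1}w1f mulrA uw mul1r.
split => //; last by rewrite -fw -mulrA wu mulr1.
have : u * (f * d * y) = 1 - (1 - f).
  have e : u * (f * d * y) + (1 - f) = 1 by rewrite -h1 -mulrDr addrA uw.
  by rewrite -{1}e (addrK (1 - f)).
by rewrite opprB addrC subrK.
Qed.

Lemma mkz {u : R} : is_inverse (f * d * y + 1 - f) u -> is_bc_inverse d b c (y * u).
Proof.
move=> hu; have [h1 hup hpu] := frominv hu; case: hu => wu uw.
have yuf : y * u * f = y * u.
  have e : y * (u * (1 - f)) = 0 by rewrite h1 mulrBr mulr1 hyf subrr.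
  rewrite mulrBr mulrBr mulr1 mulrA in e.
  by move/eqP: e; rewrite subr_eq0 => /eqP <-.
have hzdy : y * u * d * y = y.
  by rewrite -{1}yuf -!mulrA (mulrA f d y) hup hyf.
case: hy => [[r hr] [_ [hyab _]]].
split; first by exists r; rewrite {1}hr -mulrA.
split; first by exists cm; rewrite -mulrA -hf yuf.
split; first by rewrite -{1}hyab !mulrA hzdy hyab.
by rewrite mulrA -cw -mulrA wu mulr1.
Qed.

Lemma ii_to_inv {r s : R} : f = f * d * y * f * r -> f = s * (f * d * y * f) ->
  is_inverse (f * d * y + 1 - f) (f * r * f + 1 - f).
Proof.
rewrite pf => hr hs.
split.
  have hq : f * (f * r * f) = f * r * f by rewrite !mulrA ff.
  rewrite (blk ff pf hq).
  by rewrite !mulrA pf -hr ff (addrAC f 1 (-f)) subrr add0r.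
have hq : f * r * f * f = f * r * f by rewrite -mulrA ff.
rewrite (blk ff hq fp).
rewrite -(mulrA (f * r) f) fp {1}hs -(mulrA s (f * d * y) r) -hr -mulrA fp -hs.
by rewrite (addrAC f 1 (-f)) subrr add0r.
Qed.

End S.
Arguments toinv {R a b c d y cm f} _ _ _ {z}.
Arguments frominv {R a b c d y cm f} _ _ _ {u}.
Arguments mkz {R a b c d y cm f} _ _ _ {u}.
Arguments ii_to_inv {R a b c d y cm f} _ _ _ {r s}.
Arguments pf {R a b c d y cm f}.
Arguments uniq_bc {R b c e z z'}.

Theorem theorem3p14 (R : pzRingType) (a b c d y cm : R)
  (hy : is_bc_inverse a b c y) (hcm : c * cm * c = c) :
  let f := cm * c in
  (bc_invertible d b c <->
     ((exists r : R, f = f * d * y * f * r) /\ (exists s : R, f = s * (f * d * y * f)))) /\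
  (bc_invertible d b c <-> invertible (f * d * y + 1 - f)) /\
  (forall z u : R, is_bc_inverse d b c z -> is_inverse (f * d * y + 1 - f) u ->
     z = y * u).
Proof.
move=> f; have hf : f = cm * c by [].
clearbody f.
split; [split|split; [split|]].
- case=> z hz; have hu := toinv hcm hf hy hz.
  have [_ h2 h3] := frominv hcm hf hy hu.
  split; [exists (f * a * z + 1 - f) | exists (f * a * z + 1 - f)].
    by rewrite (pf hcm hf hy) h3.
  by rewrite (pf hcm hf hy) h2.
- case=> [[r hr] [s hs]].
  by exists (y * (f * r * f + 1 - f)); apply: (mkz hcm hf hy); apply: (ii_to_inv hcm hf hy hr hs).
- by case=> z hz; exists (f * a * z + 1 - f); apply: (toinv hcm hf hy hz).
- by case=> u hu; exists (y * u); apply: (mkz hcm hf hy).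
- move=> z u hz hu; exact: (uniq_bc hz (mkz hcm hf hy hu)).
Qed.
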